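(* Let $m,n\geq 0$ be integers. Then \[ \sum_{k=1}^{n}\frac{(q/z;q)_{k}(z;q)_{n-k}(z;q)_m}{(q;q)_k (q;q)_{n-k}(q^k;q)_{m+1}}z^k -\sum_{k=1}^{m}\frac{(q/z;q)_{k}(z;q)_{m-k}(z;q)_n}{(q;q)_k (q;q)_{m-k}(q^k;q)_{n+1}}z^k \] \[ =\frac{(1-zq^{-1})(z;q)_m(z;q)_n}{(q;q)_{m}(q;q)_{n}}\left(\sum_{k=1}^m\frac{q^k}{(1-zq^{k-1})(1-q^k)}-\sum_{k=1}^n\frac{q^k}{(1-zq^{k-1})(1-q^k)}\right). \]
   Context: For $N\geq 0$, $(x;q)_N=(1-x)(1-xq)\cdots(1-xq^{N-1})$ (with $(x;q)_0=1$). The identity is one of rational functions in $q$ and $z$. *)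

(* Defs.v *)
From mathcomp Require Import all_boot all_order all_algebra.
Set Implicit Arguments. Unset Strict Implicit. Unset Printing Implicit Defensive.
Import Order.TTheory GRing.Theory Num.Theory.
Local Open Scope ring_scope.

Definition qpoch (K : fieldType) (x q : K) (N : nat) : K :=
  \prod_(i < N) (1 - x * q ^+ i).

(* Main.v *)
Require Import Defs.
From mathcomp Require Import all_boot all_order all_algebra.
From mathcomp Require Import ring zify.
Import GRing.Theory.
Local Open Scope ring_scope.

Lemma qpS {K : fieldType} (x q : K) N : qpoch x q N.+1 = qpoch x q N * (1 - x * q ^+ N).
Proof. by rewrite /qpoch big_ord_recr. Qed.

Lemma qpSl {K : fieldType} (x q : K) N : qpoch x q N.+1 = (1 - x) * qpoch (x * q) q N.
Proof.
rewrite /qpoch big_ord_recl /= expr0 mulr1; congr (_ * _).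
by apply: eq_bigr => i _; rewrite /bump /= exprS mulrA.
Qed.

Lemma qp0 {K : fieldType} (x q : K) : qpoch x q 0 = 1.
Proof. by rewrite /qpoch big_ord0. Qed.

Lemma qp_neq0 {K : fieldType} (x q : K) N :
  (forall i, (i < N)%N -> 1 - x * q ^+ i != 0) -> qpoch x q N != 0.
Proof. move=> h; rewrite /qpoch; apply/prodf_neq0 => i _; exact: h. Qed.

Definition cc {K : fieldType} (q z : K) (b k : nat) : K :=
  (\prod_(j < k) (z - q ^+ j.+1)) * qpoch z q (b - k) / (qpoch q q k * qpoch q q (b - k)).

Definition trm {K : fieldType} (q z : K) (a b : nat) (w : K) (k : nat) : K :=
  cc q z b k * (qpoch (z * w) q a / qpoch (q ^+ k * w) q a.+1).

Definition Phi {K : fieldType} (q z : K) (lo a b : nat) (w : K) : K :=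
  \sum_(lo <= k < b.+1) trm q z a b w k.

Lemma aux1 {K : fieldType} (c x d y : K) : c * (y * (x / d)) = y * ((c * x) / d).
Proof. by rewrite mulrCA (mulrA c). Qed.

Lemma qpz {K : fieldType} (q z w : K) a :
  (1 - z * w) * qpoch (z * (q * w)) q a = qpoch (z * w) q a * (1 - z * w * q ^+ a).
Proof. by rewrite -(qpS (z * w)) qpSl -mulrA (mulrC w q). Qed.

Lemma Rm_term {K : fieldType} (q z w : K) a b k :
  1 - q ^+ a.+1 != 0 -> 1 - q ^+ k * w != 0 -> 1 - q ^+ k * w * q * q ^+ a != 0 ->
  qpoch (q ^+ k * w * q) q a != 0 ->
  (1 - q ^+ a.+1) * trm q z a.+1 b w k =
  (1 - z * w * q ^+ a) * trm q z a b w k - q ^+ a.+1 * ((1 - z * w) * trm q z a b (q * w) k).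
Proof.
move=> h1 h2 h3 h4.
rewrite /trm (aux1 (1 - z * w)) qpz.
have e1 : qpoch (q ^+ k * w) q a.+2 =
   (1 - q ^+ k * w) * (qpoch (q ^+ k * w * q) q a * (1 - q ^+ k * w * q * q ^+ a)).
  by rewrite qpSl qpS.
have e2 : qpoch (q ^+ k * w) q a.+1 = (1 - q ^+ k * w) * qpoch (q ^+ k * w * q) q a.
  by rewrite qpSl.
have e3 : qpoch (q ^+ k * (q * w)) q a.+1 =
   qpoch (q ^+ k * w * q) q a * (1 - q ^+ k * w * q * q ^+ a).
  by rewrite qpS (mulrC q w) mulrA.
rewrite e1 e2 e3 qpS exprS.
set C := cc q z b k; set Z := qpoch (z * w) q a; set A := qpoch (q ^+ k * w * q) q a.
set Q := q ^+ k; set M := q ^+ a.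
move: h1 h2 h3 h4; rewrite -/Q -/M -/A exprS -/M => h1 h2 h3 h4.
field. by rewrite h4 h3 h2 /=.
Qed.

Definition tt {K : fieldType} (q z : K) (a b : nat) (w : K) (j : nat) : K :=
  - (q ^+ b.+1 / q ^+ j) * (1 - q ^+ j) * trm q z a b.+1 w j.

Lemma Rn_term {K : fieldType} (q z w : K) a k d :
  q != 0 -> 1 - q ^+ k.+1 != 0 -> 1 - q ^+ d.+1 != 0 -> qpoch q q k != 0 -> qpoch q q d != 0 ->
  1 - q ^+ k * w != 0 -> qpoch (q ^+ k.+1 * w) q a != 0 -> 1 - q ^+ k.+1 * w * q ^+ a != 0 ->
  (1 - q ^+ (k + d).+1) * trm q z a (k + d).+1 w k - (1 - z * w * q ^+ (k + d)) * trm q z a (k + d) w k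
  + q ^+ (k + d).+1 * ((1 - z * w) * trm q z a (k + d) (q * w) k)
  = tt q z a (k + d) w k.+1 - tt q z a (k + d) w k.
Proof.
move=> hq0 h1 h2 h3 h4 h5 h6 h7.
rewrite /tt /trm (aux1 (1 - z * w)) qpz.
have e1 : qpoch (q ^+ k * w) q a.+1 = (1 - q ^+ k * w) * qpoch (q ^+ k.+1 * w) q a.
  by rewrite qpSl exprSr mulrAC.
have e2 : qpoch (q ^+ k * (q * w)) q a.+1 = qpoch (q ^+ k.+1 * w) q a * (1 - q ^+ k.+1 * w * q ^+ a).
  by rewrite mulrA -exprSr qpS.
have e3 : qpoch (q ^+ k.+1 * w) q a.+1 = qpoch (q ^+ k.+1 * w) q a * (1 - q ^+ k.+1 * w * q ^+ a).
  by rewrite qpS.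
rewrite e1 e2 e3 /cc.
have s1 : ((k + d).+1 - k = d.+1)%N by rewrite -addnS addKn.
have s2 : ((k + d) - k = d)%N by rewrite addKn.
have s3 : ((k + d).+1 - k.+1 = d)%N by rewrite subSS addKn.
rewrite s1 s2 s3 big_ord_recr /= !qpS.
move: h1 h2 h5 h6 h7.
rewrite !exprSr !exprD.
set Q := q ^+ k; set D := q ^+ d; set M := q ^+ a.
set Pi := \prod_(j < k) (z - Q ^+ 0 * q ^+ j * q).
set A := qpoch (Q * q * w) q a.
move=> h1 h2 h5 h6 h7.
have hQ : Q != 0 by rewrite expf_neq0.
idtac.
field.
by rewrite h6 h5 (mulrC q D) h2 h4 h3 hQ h7 (mulrC q Q) h1 hq0.
Qed.

Lemma pw1 {K : fieldType} (q w : K) k i : q ^+ k * w * q * q ^+ i = q ^+ (k + i).+1 * w.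
Proof. rewrite exprSr exprD; ring. Qed.
Lemma pw2 {K : fieldType} (q w : K) k i : q ^+ k.+1 * w * q ^+ i = q ^+ (k + i).+1 * w.
Proof. rewrite !exprSr exprD; ring. Qed.

Definition hW {K : fieldType} (q : K) lo N w := forall j, (lo <= j <= N)%N -> 1 - q ^+ j * w != 0.
Definition hQ {K : fieldType} (q : K) N := forall j, (0 < j <= N)%N -> 1 - q ^+ j != 0.

Lemma qqk_neq0 {K : fieldType} (q : K) N k : hQ q N -> (k <= N)%N -> qpoch q q k != 0.
Proof.
move=> h hk; apply: qp_neq0 => i hi; rewrite -exprS; apply: h; lia.
Qed.

Lemma RmSum {K : fieldType} (q z w : K) lo a b :
  hQ q (a + b).+1 -> hW q lo (a + b).+1 w ->
  (1 - q ^+ a.+1) * Phi q z lo a.+1 b w =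
  (1 - z * w * q ^+ a) * Phi q z lo a b w - q ^+ a.+1 * ((1 - z * w) * Phi q z lo a b (q * w)).
Proof.
move=> hq hw; rewrite /Phi !mulr_sumr -sumrB; apply: eq_big_nat => k /andP[hk1 hk2].
apply: Rm_term.
- by apply: hq; lia.
- by apply: hw; lia.
- rewrite pw1; apply: hw; lia.
- apply: qp_neq0 => i hi; rewrite pw1; apply: hw; lia.
Qed.

Lemma RnSum {K : fieldType} (q z w : K) lo a b :
  q != 0 -> (lo <= b.+1)%N -> hQ q (a + b).+1 -> hW q lo (a + b).+1 w ->
  (1 - q ^+ b.+1) * Phi q z lo a b.+1 w =
  (1 - z * w * q ^+ b) * Phi q z lo a b w - q ^+ b.+1 * ((1 - z * w) * Phi q z lo a b (q * w))
  - tt q z a b w lo.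
Proof.
move=> hq0 hlo hq hw.
have key : \sum_(lo <= k < b.+1)
   ((1 - q ^+ b.+1) * trm q z a b.+1 w k - (1 - z * w * q ^+ b) * trm q z a b w k
    + q ^+ b.+1 * ((1 - z * w) * trm q z a b (q * w) k))
   = tt q z a b w b.+1 - tt q z a b w lo.
  apply: telescope_sumr_eq => // k /andP[hk1 hk2].
  have hkb : (k <= b)%N by lia.
  move: (@Rn_term K q z w a k (b - k)); rewrite subnKC //; apply.
  + exact: hq0.
  + by apply: hq; lia.
  + by apply: hq; lia.
  + by apply: (@qqk_neq0 _ q _ _ hq); lia.
  + by apply: (@qqk_neq0 _ q _ _ hq); lia.
  + by apply: hw; lia.
  + by apply: qp_neq0 => i hi; rewrite pw2; apply: hw; lia.
  + by rewrite pw2; apply: hw; lia.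
rewrite big_split big_split /= sumrN -!mulr_sumr in key.
rewrite /Phi big_nat_recr //=.
have e : tt q z a b w b.+1 = - ((1 - q ^+ b.+1) * trm q z a b.+1 w b.+1).
  rewrite /tt divff ?expf_neq0 //; ring.
move: key; rewrite e => key.
set S1 := \sum_(lo <= k < b.+1) trm q z a b.+1 w k in key *.
set S2 := \sum_(lo <= k < b.+1) trm q z a b w k in key *.
set S3 := \sum_(lo <= k < b.+1) trm q z a b (q * w) k in key *.
set T := trm q z a b.+1 w b.+1 in key e *.
set t0 := tt q z a b w lo in key *.
rewrite mulrDr.
have -> : (1 - q ^+ b.+1) * S1 = ((1 - q ^+ b.+1) * S1 - (1 - z * w * q ^+ b) * S2
   + q ^+ b.+1 * ((1 - z * w) * S3)) + (1 - z * w * q ^+ b) * S2 - q ^+ b.+1 * ((1 - z * w) * S3).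
  ring.
rewrite key; ring.
Qed.

Lemma hQ_le {K : fieldType} (q : K) M N : (M <= N)%N -> hQ q N -> hQ q M.
Proof. move=> hMN h j hj; apply: h; lia. Qed.
Lemma hW_le {K : fieldType} (q w : K) lo M N : (M <= N)%N -> hW q lo N w -> hW q lo M w.
Proof. move=> hMN h j hj; apply: h; lia. Qed.
Lemma hW_sh {K : fieldType} (q w : K) lo N : hW q lo N.+1 w -> hW q lo N (q * w).
Proof. move=> h j hj; rewrite mulrA -exprSr; apply: h; lia. Qed.

Lemma tt0 {K : fieldType} (q z : K) a b w : tt q z a b w 0 = 0.
Proof. by rewrite /tt expr0 subrr mulr0 mul0r. Qed.

Ltac side hq hw := first [ by apply: (@hW_le _ _ _ _ _ _ _ hw); lia | by apply: (@hQ_le _ _ _ _ _ hq); lia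
  | by apply: hW_sh; apply: (@hW_le _ _ _ _ _ _ _ hw); lia | by [] ].

Lemma Sym {K : fieldType} (q z : K) : q != 0 -> forall m n w,
  hQ q (m + n) -> hW q 0 (m + n) w -> Phi q z 0 m n w = Phi q z 0 n m w.
Proof.
move=> hq0; elim=> [|m IH] n w.
  elim: n w => [|n IHn] w hq hw; first by [].
  have hq1 : 1 - q ^+ n.+1 != 0 by apply: hq; lia.
  apply: (mulfI hq1).
  rewrite (RnSum _ _ _ _ _ _ hq0); try side hq hw.
  rewrite (RmSum _ _ _ _ _ _); try side hq hw.
  rewrite tt0 subr0 !IHn //; side hq hw.
move=> hq hw.
have hq1 : 1 - q ^+ m.+1 != 0 by apply: hq; lia.
apply: (mulfI hq1).
rewrite (RmSum _ _ _ _ _ _); try side hq hw.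
rewrite (RnSum _ _ _ _ _ _ hq0); try side hq hw.
rewrite tt0 subr0 !IH //; side hq hw.
Qed.

Definition S {K : fieldType} (q z : K) m n := Phi q z 1 m n 1.
Definition H {K : fieldType} (q z : K) m :=
  \sum_(1 <= k < m.+1) q ^+ k / ((1 - z * q ^+ k.-1) * (1 - q ^+ k)).
Definition ee {K : fieldType} (q z : K) m := qpoch z q m / qpoch q q m.
Definition E {K : fieldType} (q z : K) m n :=
  S q z m n - S q z n m = (1 - z * q^-1) * (ee q z m * ee q z n) * (H q z m - H q z n).

Lemma Phi01 {K : fieldType} (q z : K) a b w : Phi q z 0 a b w = trm q z a b w 0 + Phi q z 1 a b w.
Proof. by rewrite /Phi big_ltn. Qed.

Lemma trm0q {K : fieldType} (q z : K) a b :
  trm q z a b (q * 1) 0 = qpoch z q b / qpoch q q b * (qpoch (z * q) q a / qpoch q q a.+1).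
Proof. by rewrite /trm /cc subn0 big_ord0 qp0 !mul1r !mulr1. Qed.

Lemma tt11 {K : fieldType} (q z : K) a b :
  tt q z a b 1 1 = - (q ^+ b.+1 / q) * (1 - q) *
   ((z - q) * qpoch z q b / ((1 - q) * qpoch q q b) * (qpoch z q a / qpoch q q a.+1)).
Proof.
rewrite /tt /trm /cc subSS subn0 big_ord1 expr1 !mulr1.
by rewrite /qpoch big_ord1 expr0 mulr1.
Qed.

Lemma ezq {K : fieldType} (q z : K) a : 1 - z != 0 ->
  qpoch (z * q) q a = qpoch z q a * (1 - z * q ^+ a) / (1 - z).
Proof. move=> h; apply: (mulfI h); rewrite -qpSl qpS; field; exact h. Qed.

Lemma Estep {K : fieldType} (q z : K) m n : q != 0 -> hQ q (m.+1 + n) ->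
  1 - z != 0 -> 1 - z * q ^+ m != 0 -> E q z m n -> E q z m.+1 n.
Proof.
move=> hq0 hq hz1 hzm IH.
have hq1 : 1 - q ^+ m.+1 != 0 by apply: hq; lia.
have hw : hW q 1 (m + n).+1 1.
  by move=> j hj; rewrite mulr1; apply: hq; lia.
have hw' : hW q 1 (n + m).+1 1 by rewrite addnC.
have hqa : hQ q (m + n).+1 by apply: (@hQ_le _ _ _ _ _ hq); lia.
have hqb : hQ q (n + m).+1 by rewrite addnC.
have sym0 : trm q z m n (q * 1) 0 + Phi q z 1 m n (q * 1) = trm q z n m (q * 1) 0 + Phi q z 1 n m (q * 1).
  rewrite -!Phi01; apply: Sym => //.
  - by apply: (@hQ_le _ _ _ _ _ hq); lia.
  - by move=> j hj; rewrite mulr1 -exprSr; apply: hq; lia.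
have sym : Phi q z 1 m n (q * 1) = trm q z n m (q * 1) 0 - trm q z m n (q * 1) 0 + Phi q z 1 n m (q * 1).
  by apply: (addrI (trm q z m n (q * 1) 0)); rewrite sym0; ring.
apply: (mulfI hq1).
rewrite /E mulrBr /S (RmSum _ _ _ _ _ _ hqa hw) (RnSum _ _ _ _ _ _ hq0 _ hqb hw') //.
rewrite sym.
move: IH; rewrite /E /S => IH.
have {}IH : Phi q z 1 m n 1 = Phi q z 1 n m 1 + (1 - z * q^-1) * (ee q z m * ee q z n) * (H q z m - H q z n).
  by rewrite -IH; ring.
rewrite IH.
have hH : H q z m.+1 = H q z m + q ^+ m.+1 / ((1 - z * q ^+ m) * (1 - q ^+ m.+1)).
  by rewrite /H big_nat_recr.
rewrite hH !trm0q tt11 !ezq // /ee !qpS !mulr1.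
have hPn : qpoch q q n != 0 by apply: (@qqk_neq0 _ q _ _ hq); lia.
have hPm : qpoch q q m != 0 by apply: (@qqk_neq0 _ q _ _ hq); lia.
have hqn : 1 - q ^+ n.+1 != 0 by apply: hq; lia.
have hqq : 1 - q != 0 by rewrite -(expr1 q); apply: hq; lia.
move: hq1 hzm hqn; rewrite !exprS.
set M := q ^+ m; set N := q ^+ n; set Hm := H q z m; set Hn := H q z n.
move=> hq1 hzm hqn.
field.
by rewrite hq1 hzm hPn hPm hq0 hqn hqq hz1.
Qed.


Definition hZ {K : fieldType} (q z : K) N := forall j, (j < N)%N -> 1 - z * q ^+ j != 0.

Lemma Erefl {K : fieldType} (q z : K) m : E q z m m.
Proof. by rewrite /E !subrr mulr0. Qed.

Lemma Em0 {K : fieldType} (q z : K) : q != 0 -> forall m, hQ q m -> hZ q z m -> E q z m 0.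
Proof.
move=> hq0; elim=> [|m IH] hq hz; first exact: Erefl.
apply: Estep => //.
- by rewrite addn0.
- by move: (hz 0%N isT); rewrite expr0 mulr1.
- by apply: hz.
apply: IH.
- by apply: (@hQ_le _ _ _ _ _ hq); lia.
- by move=> j hj; apply: hz; lia.
Qed.

Lemma Eall {K : fieldType} (q z : K) : q != 0 -> forall m n,
  hQ q (m + n) -> hZ q z (maxn m n) -> E q z m n.
Proof.
move=> hq0; elim=> [|m IH] n hq hz.
  have h := @Em0 K q z hq0 n.
  rewrite /E; rewrite /E in h; rewrite -opprB h; last first.
  - by move=> j hj; apply: hz; lia.
  - by rewrite add0n in hq.
  ring.
apply: Estep => //.
- by move: (hz 0%N ltac:(lia)); rewrite expr0 mulr1.
- by apply: hz; lia.
apply: IH.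
- by apply: (@hQ_le _ _ _ _ _ hq); lia.
- by move=> j hj; apply: hz; lia.
Qed.

Lemma pz {K : fieldType} (q z : K) k : z != 0 ->
  qpoch (q / z) q k * z ^+ k = \prod_(j < k) (z - q ^+ j.+1).
Proof.
move=> hz; rewrite /qpoch -[in z ^+ k](card_ord k) -prodr_const -big_split /=.
by apply: eq_bigr => i _; rewrite exprS; field.
Qed.

Lemma conv {K : fieldType} (q z : K) a b k : z != 0 ->
  qpoch (q / z) q k * qpoch z q (b - k) * qpoch z q a
       / (qpoch q q k * qpoch q q (b - k) * qpoch (q ^+ k) q a.+1) * z ^+ k = trm q z a b 1 k.
Proof.
move=> hz; rewrite /trm /cc !mulr1 -pz //; rewrite !invfM; ring.
Qed.

Theorem corollary6p1 (K : fieldType) (m n : nat) (q z : K)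
  (hq0 : q != 0) (hz0 : z != 0)
  (hq : forall j : nat, (0 < j <= m + n)%N -> q ^+ j != 1)
  (hz : forall j : nat, (j < maxn m n)%N -> z * q ^+ j != 1) :
  \sum_(1 <= k < n.+1)
      (qpoch (q / z) q k * qpoch z q (n - k) * qpoch z q m
       / (qpoch q q k * qpoch q q (n - k) * qpoch (q ^+ k) q m.+1)) * z ^+ k
  - \sum_(1 <= k < m.+1)
      (qpoch (q / z) q k * qpoch z q (m - k) * qpoch z q n
       / (qpoch q q k * qpoch q q (m - k) * qpoch (q ^+ k) q n.+1)) * z ^+ k
  = (1 - z * q^-1) * qpoch z q m * qpoch z q n / (qpoch q q m * qpoch q q n)
    * (\sum_(1 <= k < m.+1) q ^+ k / ((1 - z * q ^+ k.-1) * (1 - q ^+ k))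
       - \sum_(1 <= k < n.+1) q ^+ k / ((1 - z * q ^+ k.-1) * (1 - q ^+ k))).
Proof.
have hq' : hQ q (m + n) by move=> j hj; rewrite subr_eq0 eq_sym; apply: hq.
have hz' : hZ q z (maxn m n) by move=> j hj; rewrite subr_eq0 eq_sym; apply: hz.
have h := @Eall K q z hq0 m n hq' hz'.
move: h; rewrite /E /S /Phi /H /ee.
under eq_bigr do rewrite -(conv _ _ _ _ _ hz0).
under [X in _ - X = _]eq_bigr do rewrite -(conv _ _ _ _ _ hz0).
move=> ->; rewrite !invfM; ring.
Qed.
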